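(* Let $\mathbf{b}=(b_n)_{n\in\mathbb{N}_0}$ be a $D$-sequence with $\frac{b_{n+1}}{b_n}\to\infty$, and let $\iota:(\mathbb{Z},\tau_{\mathbf{b}})\to c_0(\mathbb{T})$, $k\mapsto(\frac{k}{b_n}+\mathbb{Z})_{n\in\mathbb{N}}$. Then $\iota(\mathbb{Z})$ is dually embedded in $c_0(\mathbb{T})$: every continuous character of $(\mathbb{Z},\tau_{\mathbf{b}})$ is of the form $\psi\circ\iota$ for some continuous character $\psi$ of $c_0(\mathbb{T})$.
   Context: $\mathbb{T}=\mathbb{R}/\mathbb{Z}$; $\mathbb{T}_m=[-\frac{1}{4m},\frac{1}{4m}]+\mathbb{Z}$. $c_0(\mathbb{T})$ is the group of sequences $(x_n)_{n\in\mathbb{N}}$ in $\mathbb{T}$ converging to $0$, with the topology of uniform convergence. A $D$-sequence is a sequence $\mathbf{b}=(b_n)_{n\in\mathbb{N}_0}$ of natural numbers with $b_0=1$, $b_n\mid b_{n+1}$, $b_n\neq b_{n+1}$. $\tau_{\mathbf{b}}$ is the group topology on $\mathbb{Z}$ with neighborhood basis at $0$ given by $V_{\mathbf{b},m}=\{k\in\mathbb{Z}: \frac{k}{b_n}+\mathbb{Z}\in\mathbb{T}_m \text{ for all } n\in\mathbb{N}\}$, $m\in\mathbb{N}$. *)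

(* Defs.v *)
From Stdlib Require Import Reals ZArith Arith.
Open Scope R_scope.

(* The circle group T = R/Z is represented by real representatives. *)

Definition is_int (x : R) : Prop := exists z : Z, x = IZR z.

Definition near0 (x eps : R) : Prop := exists z : Z, Rabs (x - IZR z) < eps.

Definition in_Tm (m : nat) (x : R) : Prop :=
  exists z : Z, Rabs (x - IZR z) <= 1 / (4 * INR m).

Definition D_sequence (b : nat -> nat) : Prop :=
  b 0%nat = 1%nat /\
  (forall n, (0 < b n)%nat) /\
  (forall n, Nat.divide (b n) (b (S n))) /\
  (forall n, b n <> b (S n)).

Definition ratio_to_infty (b : nat -> nat) : Prop :=
  forall M : R, exists N : nat, forall n : nat, (N <= n)%nat ->
    M <= INR (b (S n)) / INR (b n).

Definition V_b (b : nat -> nat) (m : nat) (k : Z) : Prop :=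
  forall n : nat, (1 <= n)%nat -> in_Tm m (IZR k / INR (b n)).

Definition Z_character (chi : Z -> R) : Prop :=
  forall a c : Z, is_int (chi (a + c)%Z - chi a - chi c).

(* Continuity of chi : (Z, tau_b) -> T at every point; the neighbourhoods of k
   in tau_b are the sets k + V_{b,m}, m in N. *)
Definition tau_b_continuous (b : nat -> nat) (chi : Z -> R) : Prop :=
  forall (k : Z) (eps : R), 0 < eps ->
    exists m : nat, (1 <= m)%nat /\
      forall j : Z, V_b b m j -> near0 (chi (k + j)%Z - chi k) eps.

(* c_0(T): sequences indexed by N = {1,2,...}; the entry of index n >= 1 is
   stored at position n-1 of x : nat -> R. *)
Definition in_c0 (x : nat -> R) : Prop :=
  forall eps : R, 0 < eps -> exists N : nat, forall i : nat, (N <= i)%nat ->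
    near0 (x i) eps.

Definition c0_continuous_character (psi : (nat -> R) -> R) : Prop :=
  (* well defined on classes modulo Z^N *)
  (forall x y, in_c0 x -> in_c0 y -> (forall i, is_int (x i - y i)) ->
     is_int (psi x - psi y)) /\
  (forall x y, in_c0 x -> in_c0 y ->
     is_int (psi (fun i => x i + y i) - psi x - psi y)) /\
  (forall x, in_c0 x -> forall eps, 0 < eps -> exists delta, 0 < delta /\
     forall y, in_c0 y -> (forall i, near0 (x i - y i) delta) ->
       near0 (psi x - psi y) eps).

Definition iota (b : nat -> nat) (k : Z) : nat -> R :=
  fun i => IZR k / INR (b (S i)).

(* Main.v *)
Require Import Defs.
From Stdlib Require Import Reals ZArith Arith Lra Lia Classical.
Open Scope R_scope.

Lemma is_int_IZR z : is_int (IZR z).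
Proof. exists z; reflexivity. Qed.

Lemma is_int_add x y : is_int x -> is_int y -> is_int (x + y).
Proof. intros [a ->] [c ->]; exists (a + c)%Z; now rewrite plus_IZR. Qed.

Lemma is_int_opp x : is_int x -> is_int (- x).
Proof. intros [a ->]; exists (- a)%Z; now rewrite opp_IZR. Qed.

Lemma is_int_sub x y : is_int x -> is_int y -> is_int (x - y).
Proof. intros; unfold Rminus; apply is_int_add; auto using is_int_opp. Qed.

Lemma is_int_mul x y : is_int x -> is_int y -> is_int (x * y).
Proof. intros [a ->] [c ->]; exists (a * c)%Z; now rewrite mult_IZR. Qed.

Lemma is_int_eq x y : x = y -> is_int x -> is_int y.
Proof. intros ->; auto. Qed.

Lemma int_small k : Rabs (IZR k) < 1 -> k = 0%Z.
Proof.
  intros H; apply Rabs_def2 in H; destruct H as [H1 H2].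
  change (- (1)) with (IZR (-1)) in H2.
  apply lt_IZR in H1; apply lt_IZR in H2; lia.
Qed.

Lemma nat_unbounded r : exists n : nat, r <= INR n.
Proof.
  destruct (archimed r) as [H1 _].
  exists (Z.to_nat (up r)).
  destruct (Z_lt_le_dec (up r) 0) as [Hl|Hl].
  - apply IZR_lt in Hl. pose proof (pos_INR (Z.to_nat (up r))). lra.
  - rewrite INR_IZR_INZ, Z2Nat.id by lia. lra.
Qed.

Lemma chi_lin chi : Z_character chi -> forall k, is_int (chi k - IZR k * chi 1%Z).
Proof.
  intros H.
  assert (H0 : is_int (chi 0%Z)).
  { pose proof (H 0%Z 0%Z) as Hz. simpl in Hz.
    apply is_int_eq with (- (chi 0%Z - chi 0%Z - chi 0%Z)); [ring|].
    now apply is_int_opp. }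
  apply Z.peano_ind.
  - apply is_int_eq with (chi 0%Z); [simpl; ring | auto].
  - intros x Hx. pose proof (H x 1%Z) as H1.
    rewrite <- Z.add_1_r.
    apply is_int_eq with ((chi (x + 1)%Z - chi x - chi 1%Z) + (chi x - IZR x * chi 1%Z)).
    + rewrite plus_IZR; simpl; ring.
    + apply is_int_add; auto.
  - intros x Hx. pose proof (H (Z.pred x) 1%Z) as H1.
    replace (Z.pred x + 1)%Z with x in H1 by lia.
    apply is_int_eq with ((chi x - IZR x * chi 1%Z) - (chi x - chi (Z.pred x) - chi 1%Z)).
    + replace (IZR (Z.pred x)) with (IZR x - 1) by (rewrite <- Z.sub_1_r, minus_IZR; simpl; ring). ring.
    + apply is_int_sub; auto.
Qed.

Section B.
Variable b : nat -> nat.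
Hypothesis hb : D_sequence b.

Lemma b_pos n : 0 < INR (b n).
Proof. destruct hb as [_ [H _]]. apply lt_0_INR, H. Qed.

Lemma b_divide n N : (n <= N)%nat -> Nat.divide (b n) (b N).
Proof.
  induction 1. apply Nat.divide_refl.
  eapply Nat.divide_trans; [apply IHle|]. destruct hb as [_ [_ [Hd _]]]; apply Hd.
Qed.

Lemma b_ge n : (S n <= b n)%nat.
Proof.
  destruct hb as [H0 [Hp [Hd Hn]]].
  induction n. rewrite H0; lia.
  destruct (Hd n) as [k Hk]. specialize (Hn n). pose proof (Hp (S n)); specialize (Hp n).
  destruct k as [|[|k]]; simpl in Hk; nia.
Qed.

Lemma b_mono n N : (n <= N)%nat -> INR (b n) <= INR (b N).
Proof.
  intros H; apply le_INR, Nat.divide_pos_le; [destruct hb as [_ [Hp _]]; apply Hp|].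
  now apply b_divide.
Qed.

Lemma b_quot_int n N t : (n <= N)%nat -> is_int (IZR t * INR (b N) / INR (b n)).
Proof.
  intros H; destruct (b_divide n N H) as [k Hk].
  rewrite Hk, mult_INR. pose proof (b_pos n).
  apply is_int_eq with (IZR t * INR k). field; lra.
  apply is_int_mul. apply is_int_IZR. rewrite INR_IZR_INZ; apply is_int_IZR.
Qed.

Definition q N := INR (b (S N)) / INR (b N).

Lemma q_int N : is_int (q N).
Proof.
  unfold q. apply is_int_eq with (IZR 1 * INR (b (S N)) / INR (b N)); [unfold Rdiv; rewrite Rmult_1_l; reflexivity|].
  apply b_quot_int; lia.
Qed.

Lemma q_eq N : INR (b (S N)) = q N * INR (b N).
Proof. unfold q. pose proof (b_pos N). field; lra. Qed.

End B.

Section A.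
Variable b : nat -> nat.
Hypothesis hb : D_sequence b.
Variable alpha : R.
Variable d : R.
Hypothesis hd : 0 < d <= 1/4.

Definition G N := exists t z : Z, Rabs (IZR t) <= d * q b N / 2 /\
   d/8 <= IZR t * (INR (b N) * alpha) - IZR z <= 7/8.

Lemma sign_exists e : exists s : Z, IZR s * e = Rabs e /\ Rabs (IZR s) = 1.
Proof.
  destruct (Rle_lt_dec 0 e).
  - exists 1%Z. rewrite Rabs_pos_eq by lra. rewrite Rabs_R1; split; [ring|auto].
  - exists (-1)%Z. rewrite Rabs_left by lra. split; [simpl; ring|]. rewrite Rabs_left; simpl; lra.
Qed.

Lemma a_step N : 4 / d <= q b N -> ~ G N ->
  exists z e, INR (b N) * alpha = IZR z + e /\ Rabs e * q b N < 1/2.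
Proof.
  intros Hq HG.
  set (u := INR (b N) * alpha). set (Q := q b N).
  assert (HdQ : 4 <= d * Q).
  { unfold Q. apply Rmult_le_compat_l with (r := d) in Hq; [|lra].
    replace (d * (4 / d)) with 4 in Hq by (field; lra). lra. }
  assert (Hsmall : exists z e, u = IZR z + e /\ Rabs e < d/8).
  { destruct (archimed u) as [H1 H2].
    set (z0 := (up u - 1)%Z).
    assert (Hz0 : IZR z0 = IZR (up u) - 1) by (unfold z0; rewrite minus_IZR; auto).
    assert (A1 : ~ (d/8 <= u - IZR z0 <= 7/8)).
    { intros Hc; apply HG; exists 1%Z, z0; split.
      - rewrite Rabs_R1; fold Q; lra.
      - simpl IZR. rewrite Rmult_1_l. exact Hc. }
    assert (A2 : ~ (d/8 <= - u - IZR (- z0 - 1) <= 7/8)).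
    { intros Hc; apply HG; exists (-1)%Z, (- z0 - 1)%Z; split.
      - assert (Rabs (IZR (-1)) = 1) as -> by (rewrite Rabs_left; simpl; lra). fold Q; lra.
      - fold u. replace (IZR (-1) * u) with (- u) by (simpl; ring). exact Hc. }
    rewrite minus_IZR, opp_IZR in A2.
    destruct (Rlt_dec (u - IZR z0) (d/8)).
    - exists z0, (u - IZR z0). split; [ring|]. rewrite Rabs_pos_eq; lra.
    - exists (z0 + 1)%Z, (u - IZR z0 - 1). rewrite plus_IZR. split; [ring|].
      rewrite Rabs_left1; lra. }
  destruct Hsmall as [z [e [Hu He]]].
  exists z, e; split; [exact Hu|].
  destruct (sign_exists e) as [s [Hs1 Hs2]].
  set (a := Rabs e).
  assert (Hind : forall k : nat, INR k <= d * Q / 2 -> INR k * a < d / 8).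
  { induction k as [|k IH]; intros Hk.
    - simpl. lra.
    - rewrite S_INR in *. assert (IH' := IH ltac:(lra)).
      destruct (Rlt_dec ((INR k + 1) * a) (d/8)) as [Hlt|Hnlt]; [exact Hlt|].
      exfalso. apply HG.
      exists (s * Z.of_nat (S k))%Z, (s * Z.of_nat (S k) * z)%Z.
      rewrite !mult_IZR, <- INR_IZR_INZ, S_INR. split.
      + fold Q. rewrite Rabs_mult, Hs2, Rabs_pos_eq by (pose proof (pos_INR k); lra). lra.
      + fold u. rewrite Hu.
        replace (IZR s * (INR k + 1) * (IZR z + e) - IZR s * (INR k + 1) * IZR z)
          with ((INR k + 1) * (IZR s * e)) by ring.
        rewrite Hs1. fold a. split; [lra|].
        assert (0 <= a) by apply Rabs_pos. replace ((INR k + 1) * a) with (INR k * a + a) by ring. unfold a in *. lra. }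
  set (r := d * Q / 2).
  destruct (archimed r) as [H1 H2].
  assert (Hup : (3 <= up r)%Z).
  { assert (H: IZR 2 < IZR (up r)) by (unfold r in *; lra). apply lt_IZR in H. lia. }
  set (k := Z.to_nat (up r - 1)).
  assert (Hk : INR k = IZR (up r) - 1).
  { unfold k. rewrite INR_IZR_INZ, Z2Nat.id by lia. rewrite minus_IZR. auto. }
  specialize (Hind k ltac:(unfold r in *; lra)).
  assert (0 <= a) by apply Rabs_pos.
  assert (r / 2 * a <= INR k * a) by (apply Rmult_le_compat_r; unfold r in *; lra).
  fold a. unfold r in *.
  assert (Hf : d * (Q * a) < d * (1/2)) by nra.
  apply Rmult_lt_reg_l in Hf; lra.
Qed.
End A.

Section P.
Variable b : nat -> nat.
Hypothesis hb : D_sequence b.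
Variable alpha : R.
Variable d : R.
Hypothesis hd : 0 < d <= 1/4.

Lemma q_big Q : 4 / d <= Q -> 16 <= Q.
Proof.
  intros Hq. apply Rmult_le_compat_l with (r := d) in Hq; [|lra].
  replace (d * (4 / d)) with 4 in Hq by (field; lra). nra.
Qed.

Lemma no_bad N0 : (forall N, (N0 <= N)%nat -> 4 / d <= q b N) ->
  (forall N, (N0 <= N)%nat -> ~ G b alpha d N) -> exists N, is_int (INR (b N) * alpha).
Proof.
  intros Hq HG.
  destruct (a_step b alpha d hd N0 (Hq N0 (le_n _)) (HG N0 (le_n _))) as [z [e [Hz He]]].
  pose proof (b_pos b hb N0) as HB0.
  assert (Hinv : forall k, exists z', INR (b (N0 + k)) * alpha =
            IZR z' + INR (b (N0 + k)) / INR (b N0) * e /\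
            Rabs (INR (b (N0 + k)) / INR (b N0) * e) * q b (N0 + k) < 1/2).
  { induction k as [|k [z' [IH1 IH2]]].
    - exists z. rewrite Nat.add_0_r. replace (INR (b N0) / INR (b N0) * e) with e by (field; lra).
      auto.
    - set (E := INR (b (N0 + k)) / INR (b N0) * e) in *.
      set (Qk := q b (N0 + k)) in *.
      assert (HQk : 16 <= Qk) by (apply q_big, Hq; lia).
      assert (HE' : INR (b (N0 + S k)) / INR (b N0) * e = Qk * E).
      { rewrite Nat.add_succ_r, (q_eq b hb). unfold E, Qk. field; lra. }
      assert (HBa : INR (b (N0 + S k)) * alpha = Qk * (IZR z' + E)).
      { rewrite Nat.add_succ_r, (q_eq b hb). fold Qk. rewrite <- IH1. ring. }
      destruct (a_step b alpha d hd (N0 + S k)%nat (Hq (N0 + S k)%nat ltac:(lia)) (HG (N0 + S k)%nat ltac:(lia)))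
        as [z'' [e'' [H1 H2]]].
      assert (HQ'' : 16 <= q b (N0 + S k)) by (apply q_big, Hq; lia).
      destruct (q_int b hb (N0 + k)) as [w Hw]. fold Qk in Hw.
      assert (Habs : Rabs (Qk * E) < 1/2).
      { rewrite Rabs_mult, (Rabs_pos_eq Qk) by lra. lra. }
      assert (Habs2 : Rabs e'' < 1/4).
      { pose proof (Rabs_pos e''). nra. }
      assert (Hint : (z'' - w * z')%Z = 0%Z).
      { apply int_small. rewrite minus_IZR, mult_IZR, <- Hw.
        replace (IZR z'' - Qk * IZR z') with (Qk * E - e'') by (rewrite HBa in H1; nra).
        apply Rle_lt_trans with (Rabs (Qk * E) + Rabs e'').
        - unfold Rminus. rewrite <- (Rabs_Ropp e''). apply Rabs_triang.
        - lra. }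
      assert (Hzz : IZR z'' = Qk * IZR z').
      { rewrite Hw, <- mult_IZR. f_equal. lia. }
      exists z''. rewrite HE'.
      assert (Hee : Qk * E = e'') by (rewrite HBa, Hzz in H1; lra).
      rewrite Hee. split; auto. }
  exists N0.
  assert (He0 : e = 0).
  { destruct (Req_dec e 0) as [|Hne]; [auto|exfalso].
    assert (Hpe : 0 < Rabs e) by (apply Rabs_pos_lt; auto).
    destruct (nat_unbounded (INR (b N0) / Rabs e)) as [k Hk].
    destruct (Hinv k) as [z' [_ H2]].
    assert (HQ : 16 <= q b (N0 + k)) by (apply q_big, Hq; lia).
    assert (Hlt : Rabs (INR (b (N0 + k)) / INR (b N0) * e) < 1/2).
    { pose proof (Rabs_pos (INR (b (N0 + k)) / INR (b N0) * e)). nra. }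
    rewrite Rabs_mult, Rabs_pos_eq in Hlt
      by (apply Rlt_le, Rdiv_lt_0_compat; auto; apply b_pos; auto).
    assert (HbK : INR k <= INR (b (N0 + k))).
    { apply le_INR. pose proof (b_ge b hb (N0 + k)). lia. }
    assert (Hk2 : INR (b N0) <= INR k * Rabs e).
    { apply Rmult_le_compat_r with (r := Rabs e) in Hk; [|lra].
      replace (INR (b N0) / Rabs e * Rabs e) with (INR (b N0)) in Hk by (field; lra). lra. }
    assert (Hfin : INR (b N0) <= INR (b (N0 + k)) * Rabs e) by nra.
    assert (Hx : INR (b (N0 + k)) / INR (b N0) * Rabs e >= 1).
    { unfold Rdiv. rewrite Rmult_assoc, (Rmult_comm (/ _)), <- Rmult_assoc.
      apply Rle_ge. apply Rmult_le_reg_r with (INR (b N0)); auto.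
      rewrite Rmult_assoc, Rinv_l by lra. lra. }
    lra. }
  exists z. rewrite Hz, He0. ring.
Qed.
End P.

Section C.
Variable b : nat -> nat.
Hypothesis hb : D_sequence b.
Variable alpha : R.
Variable m : nat.
Hypothesis hm : (1 <= m)%nat.
Let d := 1 / (4 * INR m).

Lemma d_pos : 0 < d.
Proof. unfold d. apply lt_0_INR in hm. apply Rdiv_lt_0_compat; lra. Qed.

Lemma le_div x y r : 0 < y -> x <= r * y -> x / y <= r.
Proof.
  intros Hy H. apply Rmult_le_reg_r with y; auto.
  unfold Rdiv. rewrite Rmult_assoc, Rinv_l by lra. lra.
Qed.

Lemma combine j t N : V_b b m j -> Rabs (IZR j) <= d / 2 * INR (b (S N)) ->
  Rabs (IZR t) <= d * q b N / 2 -> V_b b m (j + t * Z.of_nat (b N)).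
Proof.
  intros Hj Hjs Ht n Hn.
  rewrite plus_IZR, mult_IZR, <- INR_IZR_INZ.
  pose proof (b_pos b hb n) as Hbn.
  destruct (le_lt_dec n N) as [HnN|HnN].
  - destruct (Hj n Hn) as [z Hz].
    destruct (b_quot_int b hb n N t HnN) as [w Hw].
    exists (z + w)%Z. rewrite plus_IZR, <- Hw.
    replace ((IZR j + IZR t * INR (b N)) / INR (b n) - (IZR z + IZR t * INR (b N) / INR (b n)))
      with (IZR j / INR (b n) - IZR z) by (field; lra). exact Hz.
  - exists 0%Z. rewrite Rminus_0_r. unfold Rdiv. rewrite Rabs_mult, Rabs_inv.
    rewrite (Rabs_pos_eq (INR (b n))) by lra. fold (Rabs (IZR j + IZR t * INR (b N)) / INR (b n)).
    apply le_div; auto.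
    pose proof (b_mono b hb (S N) n HnN) as Hmono.
    pose proof (q_eq b hb N) as HqN.
    pose proof (b_pos b hb N).
    assert (Htb : Rabs (IZR t) * INR (b N) <= d / 2 * INR (b (S N))).
    { rewrite HqN. assert (0 < INR (b N)) by auto. nra. }
    apply Rle_trans with (Rabs (IZR j) + Rabs (IZR t) * INR (b N)).
    { apply Rle_trans with (Rabs (IZR j) + Rabs (IZR t * INR (b N))); [apply Rabs_triang|].
      rewrite Rabs_mult, (Rabs_pos_eq (INR (b N))) by lra. lra. }
    assert (d * INR (b (S N)) <= d * INR (b n)) by (apply Rmult_le_compat_l; [pose proof d_pos; lra|auto]).
    unfold d in *. lra.
Qed.

Lemma V0 : V_b b m 0%Z.
Proof. intros n _. exists 0%Z. unfold Rdiv. rewrite Rmult_0_l, Rminus_0_r, Rabs_R0.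
  pose proof d_pos. unfold d in *. lra. Qed.

Hypothesis Hgood : forall N0, exists N, (N0 <= N)%nat /\ G b alpha d N.

Lemma big_N j : exists N0, forall N, (N0 <= N)%nat -> Rabs (IZR j) <= d / 2 * INR (b (S N)).
Proof.
  destruct (nat_unbounded (2 * Rabs (IZR j) / d)) as [N0 HN0].
  exists N0. intros N HN.
  pose proof d_pos.
  assert (INR N0 <= INR (b (S N))).
  { apply le_INR. pose proof (b_ge b hb (S N)). lia. }
  assert (2 * Rabs (IZR j) / d <= INR (b (S N))) by lra.
  apply Rmult_le_compat_l with (r := d) in H1; [|lra].
  replace (d * (2 * Rabs (IZR j) / d)) with (2 * Rabs (IZR j)) in H1 by (field; lra). lra.
Qed.

Lemma iter : forall n : nat,
  (exists j z, V_b b m j /\ 1/8 <= IZR j * alpha - IZR z <= 7/8) \/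
  (exists j z, V_b b m j /\ INR n * (d/8) <= IZR j * alpha - IZR z < 1/8).
Proof.
  induction n as [|n [IH|[j [z [Hj Hx]]]]].
  - right. exists 0%Z, 0%Z. split; [apply V0|]. simpl. lra.
  - left; auto.
  - destruct (big_N j) as [N0 HN0].
    destruct (Hgood N0) as [N [HN [t [z' [Ht Hy]]]]].
    destruct (Rle_lt_dec (1/8) (IZR t * (INR (b N) * alpha) - IZR z')) as [Hbig|Hsmall].
    + left. exists (0 + t * Z.of_nat (b N))%Z, z'. split.
      * apply combine; auto. apply V0. rewrite Rabs_R0. pose proof d_pos.
        pose proof (b_pos b hb (S N)). nra.
      * rewrite plus_IZR, mult_IZR, <- INR_IZR_INZ. simpl IZR. lra.
    + assert (Hsum : IZR (j + t * Z.of_nat (b N)) * alpha - IZR (z + z') =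
                     (IZR j * alpha - IZR z) + (IZR t * (INR (b N) * alpha) - IZR z')).
      { rewrite !plus_IZR, mult_IZR, <- INR_IZR_INZ. ring. }
      destruct (Rle_lt_dec (1/8) (IZR (j + t * Z.of_nat (b N)) * alpha - IZR (z + z'))).
      * left. exists (j + t * Z.of_nat (b N))%Z, (z + z')%Z. split.
        { apply combine; auto. }
        rewrite Hsum in *. lra.
      * right. exists (j + t * Z.of_nat (b N))%Z, (z + z')%Z. split.
        { apply combine; auto. }
        rewrite Hsum in *. rewrite S_INR. lra.
Qed.

Lemma final_contra :
  (forall j, V_b b m j -> exists z, Rabs (IZR j * alpha - IZR z) < 1/8) -> False.
Proof.
  intros Hc.
  pose proof d_pos.
  destruct (nat_unbounded (1 / d)) as [n Hn].
  destruct (iter n) as [[j [z [Hj Hx]]]|[j [z [Hj Hx]]]].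
  - destruct (Hc j Hj) as [z' Hz'].
    apply Rabs_def2 in Hz'.
    replace (IZR j * alpha - IZR z') with ((IZR j * alpha - IZR z) + IZR (z - z')) in Hz'
      by (rewrite minus_IZR; ring).
    destruct (Z_lt_le_dec (z - z') 0) as [H1|H1].
    + assert (IZR (z - z') <= -1) by (apply IZR_le; lia). lra.
    + destruct (Z.eq_dec (z - z') 0) as [H2|H2].
      * rewrite H2 in Hz'. simpl in Hz'. lra.
      * assert (1 <= IZR (z - z')) by (apply IZR_le; lia). lra.
  - assert (1 <= INR n * d).
    { apply Rmult_le_compat_r with (r := d) in Hn; [|lra].
      replace (1 / d * d) with 1 in Hn by (field; lra). lra. }
    lra.
Qed.
End C.

Theorem corollary4p5 (b : nat -> nat) (hb : D_sequence b)
  (hratio : ratio_to_infty b) (chi : Z -> R)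
  (hchi : Z_character chi) (hcont : tau_b_continuous b chi) :
  exists psi : (nat -> R) -> R,
    c0_continuous_character psi /\
    forall k : Z, is_int (chi k - psi (iota b k)).
Proof.
  set (alpha := chi 1%Z).
  pose proof (chi_lin chi hchi) as Hlin.
  destruct (classic (exists N, is_int (INR (b N) * alpha))) as [[N [a Ha]]|Hno].
  - destruct (q_int b hb N) as [w Hw].
    exists (fun x => IZR (w * a) * x N). split.
    + split; [|split].
      * intros x y _ _ Hxy. destruct (Hxy N) as [v Hv].
        apply is_int_eq with (IZR (w * a) * (x N - y N)); [ring|].
        rewrite Hv. apply is_int_mul; apply is_int_IZR.
      * intros x y _ _. exists 0%Z. simpl. ring.
      * intros x _ eps Heps. set (A := Rabs (IZR (w * a))).
        assert (HA : 0 <= A) by apply Rabs_pos.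
        exists (eps / (A + 1)). split; [apply Rdiv_lt_0_compat; lra|].
        intros y _ Hy. destruct (Hy N) as [z Hz].
        exists (w * a * z)%Z.
        replace (IZR (w * a) * x N - IZR (w * a) * y N - IZR (w * a * z))
          with (IZR (w * a) * (x N - y N - IZR z)) by (rewrite (mult_IZR (w * a) z); ring).
        rewrite Rabs_mult. fold A.
        assert (Hd : eps / (A + 1) * (A + 1) = eps) by (field; lra).
        pose proof (Rabs_pos (x N - y N - IZR z)).
        nra.
    + intros k. unfold iota.
      apply is_int_eq with (chi k - IZR k * alpha).
      * rewrite mult_IZR, <- Hw, <- Ha. unfold q. pose proof (b_pos b hb N).
        pose proof (b_pos b hb (S N)). field; lra.
      * apply Hlin.
  - exfalso.
    destruct (hcont 0%Z (1/8) ltac:(lra)) as [m [hm Hm]].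
    assert (Hc : forall j, V_b b m j -> exists z, Rabs (IZR j * alpha - IZR z) < 1/8).
    { intros j Hj. destruct (Hm j Hj) as [z Hz]. rewrite Z.add_0_l in Hz.
      destruct (Hlin j) as [w1 Hw1]. destruct (Hlin 0%Z) as [w0 Hw0].
      exists (z - w1 + w0)%Z. rewrite plus_IZR, minus_IZR.
      replace (IZR j * alpha - (IZR z - IZR w1 + IZR w0))
        with (chi j - chi 0%Z - IZR z) by (simpl IZR in Hw0; fold alpha in Hw1, Hw0; lra).
      exact Hz. }
    apply (final_contra b hb alpha m hm); [|exact Hc].
    intros N0. apply NNPP. intros Hnot.
    apply Hno.
    assert (Hmr : 1 <= INR m) by (apply (le_INR 1); auto).
    set (d := 1 / (4 * INR m)).
    assert (hd : 0 < d <= 1/4).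
    { unfold d. split; [apply Rdiv_lt_0_compat; lra|].
      apply le_div; [lra|]. lra. }
    destruct (hratio (4 / d)) as [N2 HN2].
    apply (no_bad b hb alpha d hd (max N0 N2)).
    + intros N HN. unfold q. apply HN2. lia.
    + intros N HN HG. apply Hnot. exists N. split; [lia|exact HG].
Qed.
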